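(* Let $G$ be a graph such that each block of $G$ has a $(w,p)$-good tree decomposition. Then $G$ has a $(w,p+1)$-good tree decomposition.
   Context: A block of $G$ is a maximal 2-connected subgraph, the subgraph induced by the endpoints of a bridge, or the subgraph induced by an isolated vertex. A tree decomposition of $G$ is a family $(B_x\subseteq V(G): x\in V(T))$ indexed by the nodes of a tree $T$ such that each edge of $G$ has both endpoints in some bag and, for each $v\in V(G)$, the nodes $x$ with $v\in B_x$ induce a non-empty connected subtree $T[v]$ of $T$; its width is the maximum bag size minus 1. Pathwidth $\operatorname{pw}$ is the minimum width of a tree decomposition indexed by a path. A tree decomposition is $(w,p)$-good if its width is at most $w$ and $\operatorname{pw}(T[v])\le p$ for every $v\in V(G)$. *)

(* Defs.v *)
(* Finite simple graphs as symmetric irreflexive relations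
   on a finType; subgraphs induced on a vertex set S : {set V}. *)
From mathcomp Require Import all_boot.
Set Implicit Arguments. Unset Strict Implicit. Unset Printing Implicit Defensive.

Section Graphs.
Variable V : finType.
Variable e : rel V.

Definition simple_graph := symmetric e /\ irreflexive e.

Definition induced (S : {set V}) : rel V :=
  fun x y => [&& x \in S, y \in S & e x y].

Definition connected_in (S : {set V}) : Prop :=
  S != set0 /\ forall x y, x \in S -> y \in S -> connect (induced S) x y.

Definition two_connected (S : {set V}) : Prop :=
  3 <= #|S| /\ connected_in S /\ forall v, v \in S -> connected_in (S :\ v).

Definition max_two_connected (S : {set V}) : Prop :=
  two_connected S /\ forall S' : {set V}, S \subset S' -> two_connected S' -> S' = S.

Definition bridge (u v : V) : Prop :=
  e u v /\
  ~~ connect (fun x y => e x y && ([set x; y] != [set u; v])) u v.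

Definition isolated (v : V) : Prop := forall u, ~~ e v u.

Definition block (S : {set V}) : Prop :=
  max_two_connected S
  \/ (exists u v, bridge u v /\ S = [set u; v])
  \/ (exists v, isolated v /\ S = [set v]).

Definition tree_rel : Prop :=
  connected_in [set: V] /\ forall c : seq V, ucycle e c -> size c < 3.

End Graphs.

Definition is_decomp (V : finType) (e : rel V) (S : {set V})
    (I : finType) (te : rel I) (B : I -> {set V}) : Prop :=
  (forall x, B x \subset S) /\
  (forall u v, u \in S -> v \in S -> e u v -> exists x, (u \in B x) && (v \in B x)) /\
  (forall v, v \in S -> connected_in te [set x | v \in B x]).

Definition width_le (V I : finType) (B : I -> {set V}) (w : nat) : Prop :=
  forall x, #|B x| <= w.+1.

Definition path_rel (n : nat) : rel 'I_n.+1 :=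
  fun i j => (i.+1 == j :> nat) || (j.+1 == i :> nat).

Definition pw_le (V : finType) (e : rel V) (S : {set V}) (p : nat) : Prop :=
  exists (n : nat) (B : 'I_n.+1 -> {set V}),
    is_decomp e S (@path_rel n) B /\ width_le B p.

Definition good_decomp (V : finType) (e : rel V) (S : {set V}) (w p : nat) : Prop :=
  exists (I : finType) (te : rel I) (B : I -> {set V}),
    simple_graph te /\ tree_rel te /\
    is_decomp e S te B /\ width_le B w /\
    (forall v, v \in S -> pw_le te [set x | v \in B x] p).

(* Main.v *)
Require Import Defs.
From mathcomp Require Import all_boot zify.
From Stdlib Require Classical_Prop.
Set Implicit Arguments. Unset Strict Implicit. Unset Printing Implicit Defensive.

Lemma hom_connect (T T' : finType) (r : rel T) (r' : rel T') (f : T -> T') :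
  (forall s t, r s t -> connect r' (f s) (f t)) ->
  forall x y, connect r x y -> connect r' (f x) (f y).
Proof.
move=> H x y /connectP [p]; elim: p x => [|z p IH] x /=.
  by move=> _ ->.
move=> /andP [rxz pz] yE; apply: connect_trans (H _ _ rxz) _; exact: (IH z pz yE).
Qed.

Lemma connect_mono (T : finType) (r r' : rel T) :
  (forall s t, r s t -> r' s t) -> forall x y, connect r x y -> connect r' x y.
Proof.
move=> H; apply: (@hom_connect _ _ r r' id) => s t /H; exact: connect1.
Qed.

Lemma connect_first (T : finType) (r : rel T) x y :
  connect r x y -> x != y -> exists2 q, r x q & connect r q y.
Proof.
move=> /connectP [[|q p]] /=; first by move=> _ ->; rewrite eqxx.
move=> /andP [rxq pq] -> _; exists q => //; apply/connectP; by exists p.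
Qed.

Lemma induced_sym (T : finType) (e : rel T) S :
  symmetric e -> symmetric (induced e S).
Proof. by move=> se x y; rewrite /induced se; case: (x \in S); case: (y \in S). Qed.

Lemma connect_induced_sym (T : finType) (e : rel T) S x y :
  symmetric e -> connect (induced e S) x y -> connect (induced e S) y x.
Proof. move=> se; by rewrite (sym_connect_sym (induced_sym S se)). Qed.

Lemma proj_connect (T : finType) (r : rel T) (X Y : {set T}) x0 :
  x0 \in X -> X \subset Y ->
  (forall s t, s \in X -> t \in Y :\: X -> r s t || r t s -> s = x0) ->
  forall x y, x \in X -> y \in X -> connect (induced r Y) x y ->
  connect (induced r X) x y.
Proof.
move=> x0X XY H x y xX yX.
pose f z := if z \in X then z else x0.
have fX z : z \in X -> f z = z by rewrite /f => ->.
move=> cxy; have := @hom_connect _ _ (induced r Y) (induced r X) f _ x y cxy.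
rewrite !fX //; apply => s t /and3P [sY tY rst].
rewrite /f; case: ifP => sX; case: ifP => tX.
- by apply: connect1; rewrite /induced sX tX.
- by rewrite (H s t) // ?inE ?tX ?tY ?rst.
- by rewrite (H t s) // ?inE ?sX ?sY ?rst ?orbT.
- by [].
Qed.

Lemma exit_lemma (T : finType) (e : rel T) (X P : {set T}) z b :
  connect (induced e X) z b -> z \notin P -> b \in P ->
  exists r, exists p, [/\ r \in X :\: P, connect (induced e (X :\: P)) z r,
     p \in X, p \in P & e r p].
Proof.
move=> /connectP [s]; elim: s z => [|q s IH] z /=.
  by move=> _ -> /negP.
move=> /andP [/and3P [zX qX ezq] pq] bE zP bP.
case qP: (q \in P).
  exists z, q; split => //; by rewrite inE zP.
have [r [p [H1 H2 H3 H4 H5]]] := IH q pq bE (negbT qP) bP.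
exists r, p; split => //.
apply: connect_trans H2; apply: connect1.
by rewrite /induced !inE zP qP zX qX ezq.
Qed.

Lemma path_rel_sym n : symmetric (@path_rel n).
Proof. by move=> i j; rewrite /path_rel orbC. Qed.

Lemma visit n (s : seq 'I_n.+1) (a b : 'I_n.+1) :
  path (@path_rel n) a s ->
  (a <= b <= last a s) || (last a s <= b <= a) -> b \in a :: s.
Proof.
elim: s a => [|q s IH] a /=.
  move=> _ H; rewrite inE; apply/eqP/val_inj => /=; move: H; lia.
move=> /andP [aq ps] H; rewrite inE; case: (b =P a) => //= /eqP bna.
have bna' : (b : nat) != a by apply: contra bna => /eqP /val_inj ->.
apply: IH ps _; move: aq H bna'; rewrite /path_rel; lia.
Qed.

Lemma path_induced_all (T : finType) (r : rel T) S a s :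
  path (induced r S) a s -> all (mem S) s.
Proof.
elim: s a => [|q s IH] a //= /andP [/and3P [_ qS _] ps]; rewrite qS; exact: IH ps.
Qed.

Lemma path_induced_sub (T : finType) (r : rel T) S a s :
  path (induced r S) a s -> path r a s.
Proof.
elim: s a => [|q s IH] a //= /andP [/and3P [_ _ ->] ps]; exact: IH ps.
Qed.

Lemma conn_conv n (S : {set 'I_n.+1}) : connected_in (@path_rel n) S ->
  forall a b c : 'I_n.+1, a <= b -> b <= c -> a \in S -> c \in S -> b \in S.
Proof.
move=> [_ H] a b c ab bc aS cS.
have /connectP [s ps cE] := H a c aS cS.
have := visit (b:=b) (path_induced_sub ps); rewrite -cE ab bc /= => /(_ isT).
rewrite inE; case/orP => [/eqP -> //|bs].
by move: (path_induced_all ps) => /allP /(_ _ bs).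
Qed.

Lemma conv_conn n (S : {set 'I_n.+1}) : S != set0 ->
  (forall a b c : 'I_n.+1, a <= b -> b <= c -> a \in S -> c \in S -> b \in S) ->
  connected_in (@path_rel n) S.
Proof.
move=> S0 H; split => //.
have main : forall d (x y : 'I_n.+1), y - x = d -> x <= y -> x \in S -> y \in S ->
    connect (induced (@path_rel n) S) x y.
  elim=> [|d IH] x y dE xy xS yS.
    have -> : x = y by apply: val_inj => /=; lia.
    exact: connect0.
  have xn : x.+1 < n.+1 by have := ltn_ord y; lia.
  pose x' : 'I_n.+1 := Ordinal xn.
  have x'S : x' \in S by apply: (H x x' y) => //=; lia.
  apply: connect_trans (IH x' y _ _ x'S yS); rewrite /=; try lia.
  by apply: connect1; rewrite /induced xS x'S /path_rel /= eqxx.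
move=> x y xS yS; case: (leqP x y) => xy; first exact: main erefl xy xS yS.
apply: connect_induced_sym; first exact: path_rel_sym.
by apply: main erefl (ltnW xy) yS xS.
Qed.

Definition npd (J : finType) (te : rel J) (S : {set J}) (k n : nat)
  (f : nat -> {set J}) : Prop :=
 [/\ forall i, i <= n -> f i \subset S,
     forall i, i <= n -> #|f i| <= k.+1,
     forall x y, x \in S -> y \in S -> te x y ->
        exists2 i, i <= n & (x \in f i) && (y \in f i),
     forall x, x \in S -> exists2 i, i <= n & x \in f i &
     forall x a b c, a <= b -> b <= c -> c <= n -> x \in f a -> x \in f c -> x \in f b].

Definition NPD (J : finType) (te : rel J) (S : {set J}) (k : nat) : Prop :=
  exists n f, @npd J te S k n f.

Definition NCPc (J : finType) (te : rel J) (S : {set J}) (k : nat) (c : J) : Prop :=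
  exists n f, [/\ @npd J te S k n f, c \in S & forall i, i <= n -> c \in f i].

Definition NCP (J : finType) (te : rel J) (S : {set J}) (k : nat) : Prop :=
  exists c, @NCPc J te S k c.

Lemma PW1 (J : finType) (te : rel J) S k : pw_le te S k -> NPD te S k.
Proof.
move=> [n [B [[HB1 [HB2 HB3]] HW]]].
exists n, (fun i => B (inord i)); split.
- by move=> i _; exact: HB1.
- by move=> i _; exact: HW.
- move=> x y xS yS txy; have [i /andP [xi yi]] := HB2 x y xS yS txy.
  exists (val i); first by have := ltn_ord i.
  by rewrite inord_val xi yi.
- move=> x xS; have [/set0Pn [i]] := HB3 x xS; rewrite inE => xi _.
  exists (val i); first by have := ltn_ord i.
  by rewrite inord_val.
- move=> x a b c ab bc cn xa xc.
  have xS : x \in S := subsetP (HB1 _) x xa.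
  have Ea : (inord a : 'I_n.+1) = a :> nat by rewrite inordK //; lia.
  have Eb : (inord b : 'I_n.+1) = b :> nat by rewrite inordK //; lia.
  have Ec : (inord c : 'I_n.+1) = c :> nat by rewrite inordK //; lia.
  have := conn_conv (HB3 x xS) (a := inord a) (b := inord b) (c := inord c).
  rewrite !inE Ea Eb Ec; by apply.
Qed.

Lemma PW2 (J : finType) (te : rel J) S k : NPD te S k -> pw_le te S k.
Proof.
move=> [n [f [H1 H2 H3 H4 H5]]].
exists n, (fun i : 'I_n.+1 => f i); split; last by move=> i; apply: H2; rewrite -ltnS.
split; first by move=> i; apply: H1; rewrite -ltnS.
split.
  move=> x y xS yS txy; have [i ilt /andP [xi yi]] := H3 x y xS yS txy.
  have il : i < n.+1 by [].
  by exists (Ordinal il); rewrite /= xi yi.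
move=> x xS; apply: conv_conn.
  have [i ilt xi] := H4 x xS; have il : i < n.+1 by [].
  by apply/set0Pn; exists (Ordinal il); rewrite inE.
move=> a b c ab bc; rewrite !inE => xa xc; apply: (H5 x a b c) => //.
by rewrite -ltnS.
Qed.

Lemma NPD_NCP (J : finType) (te : rel J) S k : NPD te S k -> S != set0 -> NCP te S k.+1.
Proof.
move=> [n [f [H1 H2 H3 H4 H5]]] /set0Pn [c cS].
exists c, n, (fun i => c |: f i); split => //; last by move=> i _; rewrite !inE eqxx.
split.
- by move=> i ilt; rewrite subUset sub1set cS H1.
- by move=> i ilt; rewrite cardsU1; have := H2 i ilt; case: (c \in f i) => /=; lia.
- move=> x y xS yS txy; have [i ilt /andP [xi yi]] := H3 x y xS yS txy.
  by exists i => //; rewrite !inE xi yi !orbT.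
- move=> x xS; have [i ilt xi] := H4 x xS.
  by exists i => //; rewrite !inE xi orbT.
- move=> x a b d ab bd dn; rewrite !inE; case: (x =P c) => //= _.
  exact: H5.
Qed.

Lemma NCP_NPD (J : finType) (te : rel J) S k : NCP te S k -> NPD te S k.
Proof. by move=> [c [n [f [H _ _]]]]; exists n, f. Qed.

Section Glue.
Variables (I1 I2 : finType) (t1 : rel I1) (t2 : rel I2) (y1 : I1) (y2 : I2).

Definition glue_rel : rel (I1 + I2)%type := fun x y =>
  match x, y with
  | inl a, inl b => t1 a b
  | inr a, inr b => t2 a b
  | inl a, inr b => (a == y1) && (b == y2)
  | inr b, inl a => (a == y1) && (b == y2)
  end.

Lemma glue_simple : simple_graph t1 -> simple_graph t2 -> simple_graph glue_rel.
Proof.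
move=> [s1 i1] [s2 i2]; split.
  by move=> [a|a] [b|b] //=; rewrite ?s1 ?s2.
by move=> [a|a] /=; rewrite ?i1 ?i2.
Qed.

Lemma connect_inl a b : connect t1 a b -> connect glue_rel (inl a) (inl b).
Proof. by apply: hom_connect => s t h; apply: connect1. Qed.

Lemma connect_inr a b : connect t2 a b -> connect glue_rel (inr a) (inr b).
Proof. by apply: hom_connect => s t h; apply: connect1. Qed.

Lemma connect_setT (T : finType) (r : rel T) x y :
  connect (induced r setT) x y = connect r x y.
Proof.
apply/idP/idP; apply: connect_mono => s t; rewrite /induced !inE //.
Qed.

Definition side (z : I1 + I2) := if z is inl _ then true else false.

Lemma side_step a q : glue_rel a q -> a != inl y1 -> q != inl y1 -> side q = side a.
Proof.
case: a => a; case: q => q //=.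
  by move=> /andP [/eqP -> _]; rewrite eqxx.
by move=> /andP [/eqP -> _] _; rewrite eqxx.
Qed.

Lemma side_path t a : path glue_rel a t -> inl y1 \notin a :: t ->
  all (fun z => side z == side a) t.
Proof.
elim: t a => [|q t IH] a //= /andP [aq pq]; rewrite in_cons negb_or => /andP [ay qt].
have sq : side q = side a.
  apply: side_step aq _ _; first by rewrite eq_sym.
  by apply: contra qt => /eqP <-; exact: mem_head.
rewrite sq eqxx /=; have := IH q pq qt; by rewrite sq.
Qed.

Definition getl (z : I1 + I2) := if z is inl a then a else y1.
Definition getr (z : I1 + I2) := if z is inr a then a else y2.

Lemma all_left c : all side c -> c = map inl (map getl c).
Proof. by elim: c => [|[a|a] c IH] //= /IH <-. Qed.

Lemma all_right c : all (fun z => ~~ side z) c -> c = map inr (map getr c).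
Proof. by elim: c => [|[a|a] c IH] //= /IH <-. Qed.

Lemma glue_tree : simple_graph t1 -> simple_graph t2 -> tree_rel t1 -> tree_rel t2 ->
  tree_rel glue_rel.
Proof.
move=> [s1 _] [s2 _] [[_ c1] a1] [[_ c2] a2]; split.
  split; first by apply/set0Pn; exists (inl y1).
  have sg : symmetric glue_rel by move=> [a|a] [b|b] //=; rewrite ?s1 ?s2.
  have toy : forall x, connect glue_rel x (inl y1).
    move=> [a|a].
      by apply: connect_inl; rewrite -connect_setT; apply: c1; rewrite inE.
    apply: (connect_trans (y := inr y2)).
      by apply: connect_inr; rewrite -connect_setT; apply: c2; rewrite inE.
    by apply: connect1; rewrite /= !eqxx.
  move=> x y _ _; rewrite connect_setT.
  apply: connect_trans (toy x) _; rewrite (sym_connect_sym sg); exact: toy.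
have leftc : forall c, ucycle glue_rel c -> all side c -> size c < 3.
  move=> c uc /all_left cE; have -> : size c = size (map getl c) by rewrite size_map.
  apply: a1; move: uc; rewrite {1}cE /ucycle map_inj_uniq; last by move=> ? ? [].
  by rewrite cycle_map.
have rightc : forall c, ucycle glue_rel c -> all (fun z => ~~ side z) c -> size c < 3.
  move=> c uc /all_right cE; have -> : size c = size (map getr c) by rewrite size_map.
  apply: a2; move: uc; rewrite {1}cE /ucycle map_inj_uniq; last by move=> ? ? [].
  by rewrite cycle_map.
move=> c uc; rewrite ltnNge; apply/negP => c3.
case yc: (inl y1 \in c).
  case: (rot_to yc) => i s rE.
  have : ucycle glue_rel (inl y1 :: s) by rewrite -rE rot_ucycle.
  have : 3 <= size (inl y1 :: s) by rewrite -rE size_rot.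
  case: s {rE} => [|a t] //= st /andP [].
  rewrite /cycle /= rcons_path => /and3P [ya pat lastx] /andP [yat ut].
  have := side_path pat yat; case sa: (side a).
    move=> H; move: (leftc (inl y1 :: a :: t)); rewrite /ucycle /cycle /= rcons_path ya pat lastx /=.
    rewrite yat ut /= sa /= => /(_ isT); rewrite ltnNge st.
    move=> K; have Hs : all side t.
      by apply/allP => z zt; move/allP: H => /(_ z zt) /eqP.
    by move: (K Hs).
  move=> H.
  have sl : side (last a t) = false.
    have : last a t \in a :: t by apply: mem_last.
    rewrite in_cons => /orP [/eqP -> //|] lt; by move/allP: H => /(_ _ lt) /eqP ->.
  have Ea : a = inr y2 by move: ya sa; case: a {pat yat ut H sl lastx} => // b /andP [_ /eqP ->].
  have El : last a t = inr y2.
    by move: lastx sl; case: (last a t) => // b /andP [_ /eqP ->].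
  case: t st pat yat ut H sl El lastx => [|q t] // _ _ _ /andP [ant _] _ _ El _.
  move: (mem_last q t); rewrite /= in El; by rewrite El -Ea (negbTE ant).
case: c c3 uc yc leftc rightc => [|b c'] // c3 uc yc leftc rightc.
have pc : path glue_rel b c'.
  by move: uc => /andP [] /=; rewrite rcons_path => /andP [].
have := side_path pc (negbT yc); case sb: (side b) => H.
  have := leftc _ uc; rewrite ltnNge c3 /= sb => K; apply: notF; apply: K.
  by apply/allP => z zt; move/allP: H => /(_ z zt) /eqP.
have := rightc _ uc; rewrite ltnNge c3 /= sb => K; apply: notF; apply: K.
by apply/allP => z zt; move/allP: H => /(_ z zt) /eqP ->.
Qed.
End Glue.

Lemma unit_tree : simple_graph (fun _ _ : unit => false) /\ tree_rel (fun _ _ : unit => false).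
Proof.
split; first by split.
split.
  split; first by apply/set0Pn; exists tt.
  by move=> [] [] _ _; exact: connect0.
by move=> [|x s] //; rewrite /ucycle /cycle rcons_path andbF.
Qed.

Section Map.
Variables (J J' : finType) (t : rel J) (t' : rel J') (h : J -> J').
Hypothesis hinj : injective h.
Hypothesis ht : forall a b, t' (h a) (h b) = t a b.
Let mi A z : (h z \in h @: A) = (z \in A) := mem_imset A z hinj.

Lemma npd_map S k n f : npd t S k n f -> npd t' (h @: S) k n (fun i => h @: f i).
Proof.
move=> [H1 H2 H3 H4 H5]; split.
- by move=> i ilt; apply: imsetS; exact: H1.
- by move=> i ilt; rewrite card_imset //; exact: H2.
- move=> x y /imsetP [a aS ->] /imsetP [b bS ->]; rewrite ht => tab.
  have [i ilt /andP [ai bi]] := H3 a b aS bS tab.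
  by exists i; [exact: ilt | rewrite !mi ai bi].
- move=> x /imsetP [a aS ->]; have [i ilt ai] := H4 a aS.
  by exists i; [exact: ilt | rewrite mi].
- move=> x a b c ab bc cn /imsetP [z za ->]; rewrite !mi // => zc.
  exact: H5 ab bc cn za zc.
Qed.

Lemma NPD_map S k : NPD t S k -> NPD t' (h @: S) k.
Proof. by move=> [n [f H]]; exists n, (fun i => h @: f i); exact: npd_map. Qed.

Lemma NCPc_map S k c : NCPc t S k c -> NCPc t' (h @: S) k (h c).
Proof.
move=> [n [f [H cS cf]]]; exists n, (fun i => h @: f i); split.
- exact: npd_map.
- by rewrite mi.
- by move=> i ilt; rewrite mi // cf.
Qed.

Lemma NCP_map S k : NCP t S k -> NCP t' (h @: S) k.
Proof. by move=> [c H]; exists (h c); exact: NCPc_map. Qed.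

Lemma conn_map S : connected_in t S -> connected_in t' (h @: S).
Proof.
move=> [S0 H]; split.
  move: S0 => /set0Pn [x xS]; apply/set0Pn; exists (h x); exact: imset_f.
move=> x y /imsetP [a aS ->] /imsetP [b bS ->].
apply: (@hom_connect _ _ (induced t S)) (H a b aS bS) => s u /and3P [sS uS tsu].
by apply: connect1; rewrite /induced !mi // sS uS ht.
Qed.
End Map.

Lemma NCP_concat (J : finType) (t : rel J) S1 S2 k c :
  NPD t S1 k -> NCPc t S2 k.+1 c -> S1 :&: S2 = set0 ->
  (forall x y, x \in S1 -> y \in S2 -> t x y || t y x -> y = c) ->
  NCPc t (S1 :|: S2) k.+1 c.
Proof.
move=> [n1 [g1 [A1 A2 A3 A4 A5]]] [n2 [g2 [[B1 B2 B3 B4 B5] cS cg]]] D E.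
have nd x : x \in S1 -> x \in S2 -> False.
  move=> x1 x2; have : x \in S1 :&: S2 by rewrite inE x1 x2.
  by rewrite D inE.
pose f i := if i <= n2 then g2 i else c |: g1 (i - n2.+1).
exists (n2 + n1.+1), f; split; last 2 first.
- by rewrite inE cS orbT.
- move=> i ilt; rewrite /f; case: ifP => ile; [exact: cg ile | by rewrite !inE eqxx].
split.
- move=> i ilt; rewrite /f; case: ifP => ile.
    by apply: subset_trans (B1 _ ile) _; exact: subsetUr.
  rewrite subUset sub1set inE cS orbT /=.
  by apply: subset_trans (A1 _ _) _; [lia | exact: subsetUl].
- move=> i ilt; rewrite /f; case: ifP => ile; first exact: B2.
  rewrite cardsU1; have := A2 (i - n2.+1) ltac:(lia); case: (c \in _) => /=; lia.
- move=> x y; rewrite !inE => /orP [x1|x2] /orP [y1|y2] txy.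
  + have [i ilt /andP [xi yi]] := A3 x y x1 y1 txy.
    exists (i + n2.+1); first lia.
    by rewrite /f ifN; [rewrite addnK !inE xi yi !orbT | lia].
  + have yc := E x y x1 y2 (introT orP (or_introl txy)); subst y.
    have [i ilt xi] := A4 x x1.
    exists (i + n2.+1); first lia.
    by rewrite /f ifN; [rewrite addnK !inE xi eqxx orbT | lia].
  + have xc := E y x y1 x2 (introT orP (or_intror txy)); subst x.
    have [i ilt yi] := A4 y y1.
    exists (i + n2.+1); first lia.
    by rewrite /f ifN; [rewrite addnK !inE yi eqxx !orbT | lia].
  + have [i ilt /andP [xi yi]] := B3 x y x2 y2 txy.
    exists i; first lia.
    by rewrite /f ifT // xi yi.
- move=> x; rewrite inE => /orP [x1|x2].
    have [i ilt xi] := A4 x x1.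
    exists (i + n2.+1); first lia.
    by rewrite /f ifN; [rewrite addnK !inE xi orbT | lia].
  have [i ilt xi] := B4 x x2; exists i; first lia.
  by rewrite /f ifT.
- move=> x a b d ab bd dn; case: (x =P c) => [->|xnc].
    move=> _ _; rewrite /f; case: ifP => bn2; [apply: cg => // | by rewrite !inE eqxx].
  rewrite /f; case: ifP => an2; case: ifP => dn2.
  + move=> xa xd; rewrite ifT; [exact: B5 ab bd dn2 xa xd | lia].
  + rewrite !inE => xa /orP [/eqP //|xd].
    have d1 : d - n2.+1 <= n1 by lia.
    by exfalso; apply: (nd x); [exact: (subsetP (A1 _ d1) x xd) | exact: (subsetP (B1 _ an2) x xa)].
  + lia.
  + rewrite !inE => /orP [/eqP //|xa] /orP [/eqP //|xd].
    rewrite ifN; last lia.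
    rewrite !inE; apply/orP; right.
    apply: (A5 x (a - n2.+1) (b - n2.+1) (d - n2.+1)) => //; lia.
Qed.

Lemma conn_union (J : finType) (t : rel J) (A B : {set J}) a b : symmetric t ->
  connected_in t A -> connected_in t B -> a \in A -> b \in B -> t a b ->
  connected_in t (A :|: B).
Proof.
move=> st [_ cA] [_ cB] aA bB tab; split; first by apply/set0Pn; exists a; rewrite inE aA.
have mA : forall x y, connect (induced t A) x y -> connect (induced t (A :|: B)) x y.
  by apply: connect_mono => x y /and3P [xA yA txy]; rewrite /induced !inE xA yA txy.
have mB : forall x y, connect (induced t B) x y -> connect (induced t (A :|: B)) x y.
  by apply: connect_mono => x y /and3P [xA yA txy]; rewrite /induced !inE xA yA txy !orbT.
have ab : connect (induced t (A :|: B)) a b.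
  by apply: connect1; rewrite /induced !inE aA bB tab orbT.
have toa : forall x, x \in A :|: B -> connect (induced t (A :|: B)) a x.
  move=> x; rewrite inE => /orP [xA|xB]; first by apply: mA; apply: cA.
  by apply: connect_trans ab _; apply: mB; apply: cB.
move=> x y xAB yAB; apply: connect_trans (toa y yAB).
by apply: connect_induced_sym => //; exact: toa.
Qed.

Section G.
Variables (V : finType) (e : rel V).
Hypothesis se : symmetric e.
Hypothesis ie : irreflexive e.

Definition closedU (U : {set V}) := forall F : rel V, (forall x y, F x y -> e x y) ->
  forall x y, x \in U -> y \in U -> connect F x y -> connect (induced F U) x y.

Lemma closedT : closedU setT.
Proof.
move=> F _ x y _ _; apply: connect_mono => s t Fst; by rewrite /induced !inE.
Qed.

Definition sep (P Q : {set V}) := forall s t, s \in P :\: Q -> t \in Q :\: P -> ~~ e s t.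

Lemma sep_sym (P Q : {set V}) : sep P Q -> sep Q P.
Proof. by move=> H s t sQ tP; rewrite se; exact: H. Qed.

Lemma proj_gen (r : rel V) (X Y : {set V}) x0 : (forall x y, r x y -> e x y) ->
  x0 \in X -> X \subset Y ->
  (forall s t, s \in X -> t \in Y :\: X -> e s t -> s = x0) ->
  forall x y, x \in X -> y \in X -> connect (induced r Y) x y ->
  connect (induced r X) x y.
Proof.
move=> re x0X XY H; apply: (proj_connect (x0 := x0)) => // s t sX tYX /orP [] /re est.
  exact: (H s t sX tYX est).
by apply: (H s t sX tYX); rewrite se.
Qed.

Lemma cond_lemma (P Q : {set V}) (x0 s t : V) : sep P Q -> P :&: Q \subset [set x0] ->
  s \in P -> t \in Q -> t \notin P -> e s t -> s = x0.
Proof.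
move=> sPQ I sP tQ tP est; case sQ: (s \in Q).
  by have := subsetP I s; rewrite !inE sP sQ => /(_ isT) /eqP.
have := sPQ s t; rewrite !inE sP sQ tQ tP /= => /(_ isT isT); by rewrite est.
Qed.

Lemma pick_x0 (P Q X : {set V}) (v z : V) : X \subset P -> z \in X -> P :&: Q \subset [set v] ->
  (v \in P -> v \in Q -> v \in X) -> exists2 x0, x0 \in X & P :&: Q \subset [set x0].
Proof.
move=> XP zX I Hv; case: (boolP ((v \in P) && (v \in Q))) => [/andP [vP vQ]|nv].
  by exists v => //; exact: Hv.
exists z => //; apply/subsetP => y yPQ; exfalso.
have := subsetP I y yPQ; rewrite inE => /eqP Ey.
by move: yPQ nv; rewrite Ey inE => ->.
Qed.

Lemma closed_part (P Q : {set V}) (v : V) : sep P Q -> P :&: Q \subset [set v] ->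
  closedU (P :|: Q) -> P != set0 -> closedU P.
Proof.
move=> sPQ I cl /set0Pn [z zP] F HF x y xP yP cxy.
have [x0 x0P I0] := pick_x0 (subxx P) zP I (fun vP _ => vP).
apply: (proj_gen (x0 := x0) (Y := P :|: Q)) => //; first exact: subsetUl.
  move=> s t sP; rewrite !inE => /andP [tnP tPQ] est.
  have tQ : t \in Q by move: tPQ => /orP [tP|//]; rewrite tP in tnP.
  exact: cond_lemma sPQ I0 sP tQ tnP est.
by apply: cl => //; rewrite inE ?xP ?yP.
Qed.

Definition noncut (U : {set V}) (u : V) := U :\ u = set0 \/ connected_in e (U :\ u).

Lemma noncut_part (P Q : {set V}) (v u : V) : sep P Q -> P :&: Q \subset [set v] ->
  u \in P -> u \notin Q -> noncut (P :|: Q) u -> noncut P u.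
Proof.
move=> sPQ I uP uQ nc.
case: (boolP (P :\ u == set0)) => [/eqP E |/set0Pn [z zX]]; first by left.
right; case: nc => [E|[_ C]].
  move: zX; rewrite !inE => /andP [zu zP].
  have : z \in (P :|: Q) :\ u by rewrite !inE zu zP.
  by rewrite E inE.
have Hv : v \in P -> v \in Q -> v \in P :\ u.
  by move=> vP vQ; rewrite !inE vP andbT; apply: contra uQ => /eqP <-.
have [x0 x0X I0] := pick_x0 (subD1set P u) zX I Hv.
split; first by apply/set0Pn; exists z.
move=> x y xX yX; apply: (proj_gen (x0 := x0) (Y := (P :|: Q) :\ u)) => //.
- by apply/subsetP => s; rewrite !inE => /andP [-> ->].
- move=> s t; rewrite !inE => /andP [su sP] /andP [/negP tn /andP [tu /orP [tP|tQ]]] est.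
    by exfalso; apply: tn; rewrite tu tP.
  apply: cond_lemma sPQ I0 sP tQ _ est; by apply/negP => tP; apply: tn; rewrite tu tP.
- apply: C; move: xX yX; rewrite !inE => /andP [xu xP] /andP [yu yP].
    by rewrite xu xP.
  by rewrite yu yP.
Qed.

Definition ccomp (X : {set V}) (a : V) := [set y in X | connect (induced e X) a y].

Lemma comp_sub (X : {set V}) (a : V) : ccomp X a \subset X.
Proof. by apply/subsetP => y; rewrite inE => /andP []. Qed.

Lemma comp_self (X : {set V}) (a : V) : a \in X -> a \in ccomp X a.
Proof. by move=> aX; rewrite inE aX connect0. Qed.

Lemma comp_closed (X : {set V}) (a s t : V) : s \in ccomp X a -> t \in X -> e s t -> t \in ccomp X a.
Proof.
rewrite !inE => /andP [sX cas] tX est; rewrite tX /=.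
by apply: connect_trans cas (connect1 _); rewrite /induced sX tX est.
Qed.

Lemma comp_conn (X : {set V}) (a : V) : a \in X -> connected_in e (ccomp X a).
Proof.
move=> aX; split; first by apply/set0Pn; exists a; exact: comp_self.
move=> x y xC yC.
apply: (proj_gen (x0 := a) (Y := X)) => //; first exact: comp_self.
- exact: comp_sub.
- move=> s t sC; rewrite inE => /andP [tC tX] est.
  by have := comp_closed sC tX est; rewrite (negbTE tC).
- move: xC yC; rewrite !inE => /andP [_ cax] /andP [_ cay].
  apply: connect_trans _ cay; exact: connect_induced_sym.
Qed.


Lemma block_of (U : {set V}) : closedU U -> connected_in e U ->
  (forall u, u \in U -> connected_in e (U :\ u)) -> 2 <= #|U| -> block e U.
Proof.
move=> cl cUU H U2; have cU := cUU.2.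
have [U2e|U3] : #|U| = 2 \/ 3 <= #|U| by lia.
  move/eqP/cards2P: U2e => [a [b [ab UE]]].
  have aU : a \in U by rewrite UE !inE eqxx.
  have bU : b \in U by rewrite UE !inE eqxx orbT.
  right; left; exists a, b; split => //.
  have eab : e a b.
    have [q /and3P [_ qU eaq] _] := connect_first (cU a b aU bU) ab.
    move: qU; rewrite UE !inE => /orP [/eqP qa|/eqP qb].
      by move: eaq; rewrite qa ie.
    by rewrite -qb.
  split; first exact: eab.
  apply/negP => cF.
  have Fe : forall x y, (e x y && ([set x; y] != [set a; b])) -> e x y.
    by move=> x y /andP [].
  have cI := cl _ Fe a b aU bU cF.
  have [q /and3P [_ qU /andP [eaq ne]] _] := connect_first cI ab.
  move: qU; rewrite UE !inE => /orP [/eqP qa|/eqP qb]; first by move: eaq; rewrite qa ie.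
  by move: ne; rewrite qb eqxx.
left; split; first by split.
move=> S' US' [S3 [cS' HS']]; apply/eqP; rewrite eqEsubset andbC US' /=.
apply/subsetP => z zS'; apply/negPn/negP => zU.
have [a aU] : exists a, a \in U.
  by apply/set0Pn; apply: contraTneq U3 => ->; rewrite cards0.
have [b bU] : exists b, b \in U :\ a.
  apply/set0Pn; apply: contraTneq U3 => E.
  by move: (cardsD1 a U); rewrite aU E cards0 => ->.
move: bU; rewrite !inE => /andP [ba bU].
have aS' : a \in S' := subsetP US' a aU.
have bS' : b \in S' := subsetP US' b bU.
have za : z != a by apply: contraNneq zU => ->.
have c1 := (HS' a aS').2 z b ltac:(by rewrite !inE za zS') ltac:(by rewrite !inE ba bS').
have [r [p1 [rX cr p1X p1U erp1]]] := exit_lemma c1 zU bU.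
move: p1X; rewrite !inE => /andP [p1a p1S'].
have zp1 : z != p1 by apply: contraNneq zU => ->.
have ap1 : a != p1 by rewrite eq_sym.
have c2 := (HS' p1 p1S').2 z a ltac:(by rewrite !inE zp1 zS') ltac:(by rewrite !inE ap1 aS').
have [r' [p2 [rX' cr' p2X p2U erp2]]] := exit_lemma c2 zU aU.
move: p2X; rewrite !inE => /andP [p2p1 p2S'].
move: rX rX'; rewrite !inE => /and3P [rU ra rS'] /and3P [rU' rp1 rS''].
pose F := fun x y => induced e S' x y && ~~ ((x \in U) && (y \in U)).
have Fe : forall x y, F x y -> e x y by move=> x y /andP [/and3P []].
have FS : symmetric F.
  by move=> x y; rewrite /F (induced_sym S' se) [(x \in U) && _]andbC.
have sub : forall X : {set V}, X \subset S' -> forall x y : V, connect (induced e (X :\: U)) x y -> connect F x y.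
  move=> X XS; apply: connect_mono => x y; rewrite /induced !inE.
  move=> /and3P [/andP [xU xX] /andP [yU yX] exy].
  by rewrite /F /induced (subsetP XS x xX) (subsetP XS y yX) exy (negbTE xU).
have Xs1 : S' :\ a \subset S' by apply: subD1set.
have Xs2 : S' :\ p1 \subset S' by apply: subD1set.
have cF : connect F p1 p2.
  apply: (connect_trans (y := r)).
    by apply: connect1; rewrite /F /induced p1S' rS' se erp1 (negbTE rU) andbF.
  apply: (connect_trans (y := z)).
    by rewrite (sym_connect_sym FS); exact: sub Xs1 _ _ cr.
  apply: (connect_trans (y := r')); first exact: sub Xs2 _ _ cr'.
  by apply: connect1; rewrite /F /induced p2S' rS'' erp2 (negbTE rU').
have p12 : p1 != p2 by rewrite eq_sym.
have [q /and3P [_ qU /andP [_ nU]] _] := connect_first (cl F Fe p1 p2 p1U p2U cF) p12.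
by rewrite p1U qU in nU.
Qed.

End G.

Section Main.
Variables (V : finType) (e : rel V) (w p : nat).
Hypothesis se : symmetric e.
Hypothesis ie : irreflexive e.

Definition Dec (U : {set V}) : Prop :=
  exists (I : finType) (te : rel I) (B : I -> {set V}),
  [/\ simple_graph te, tree_rel te, is_decomp e U te B, width_le B w &
      forall u, u \in U -> NCP te [set x | u \in B x] p.+1 /\
                          (noncut e U u -> NPD te [set x | u \in B x] p)].

Lemma Dec_from_good U : good_decomp e U w p -> Dec U.
Proof.
move=> [I [te [B [s [tr [D [W P]]]]]]]; exists I, te, B; split => // u uU; split.
  apply: NPD_NCP; first exact: PW1 (P u uU).
  exact: (D.2.2 u uU).1.
by move=> _; exact: PW1 (P u uU).
Qed.

Lemma npd_unit k (S : {set unit}) : tt \in S ->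
  npd (fun _ _ : unit => false) S k 0 (fun _ => [set tt]).
Proof.
move=> ttS; split.
- by move=> i _; rewrite sub1set.
- by move=> i _; rewrite cards1.
- by [].
- by move=> [] _; exists 0 => //; rewrite inE.
- by move=> [] a b c _ _ _; rewrite !inE.
Qed.

Lemma Dec_empty : Dec set0.
Proof.
have [s t] := unit_tree.
exists unit, (fun _ _ => false), (fun _ => set0); split => //.
- split; first by move=> _; exact: sub0set.
  by split => u; rewrite inE.
- by move=> x; rewrite cards0.
- by move=> u; rewrite inE.
Qed.

Lemma Dec_single a : Dec [set a].
Proof.
have [s t] := unit_tree.
have ttS : tt \in [set x : unit | a \in [set a]] by rewrite !inE.
exists unit, (fun _ _ => false), (fun _ => [set a]); split => //.
- split; first by move=> _; exact: subxx.
  split.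
    move=> u v; rewrite !inE => Hu Hv _; exists tt; by rewrite Hu Hv.
  move=> u; rewrite inE => /eqP ->; split; first by apply/set0Pn; exists tt; rewrite !inE.
  by move=> [] [] _ _; exact: connect0.
- by move=> x; rewrite cards1.
- move=> u; rewrite inE => /eqP ->; split.
    exists tt, 0, (fun _ => [set tt]); split; first (by apply: npd_unit; rewrite !inE).
      by rewrite !inE.
    by move=> i _; rewrite inE.
  by move=> _; exists 0, (fun _ => [set tt]); apply: npd_unit; rewrite !inE.
Qed.


Lemma inl_inj (A B : Type) : injective (@inl A B). Proof. by move=> ? ? []. Qed.
Lemma inr_inj (A B : Type) : injective (@inr A B). Proof. by move=> ? ? []. Qed.

Lemma inl_notin_inr (A B : finType) (X : {set B}) (a : A) :
  (inl a \in [set inr y | y in X]) = false.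
Proof. by apply/negbTE/negP => /imsetP [? _]. Qed.

Lemma inr_notin_inl (A B : finType) (X : {set A}) (a : B) :
  (inr a \in [set inl y | y in X]) = false.
Proof. by apply/negbTE/negP => /imsetP [? _]. Qed.

Lemma imsetLR (A B : finType) (X : {set A}) (Y : {set B}) :
  [set inl x | x in X] :&: [set inr y | y in Y] = set0 :> {set (A + B)%type}.
Proof.
apply/setP => z; rewrite inE in_set0; apply/negbTE/negP => /andP [/imsetP [x _ ->] /imsetP [y _ //]].
Qed.

Lemma Dec_glue U1 U2 v : Dec U1 -> Dec U2 -> v \in U1 -> U1 :&: U2 \subset [set v] ->
  sep e U1 U2 -> (v \in U2 -> noncut e U1 v) -> (v \in U2 -> ~ noncut e (U1 :|: U2) v) ->
  Dec (U1 :|: U2).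
Proof.
move=> [I1 [t1 [B1 [s1 tr1 [D1a [D1b D1c]] W1 P1]]]].
move=> [I2 [t2 [B2 [s2 tr2 [D2a [D2b D2c]] W2 P2]]]] vU1 I12 sp nc1 ncU.
have [y1 [y2 Hy]] : exists y1 y2, v \in U2 ->
    [/\ y1 \in [set x | v \in B1 x], NCPc t2 [set x | v \in B2 x] p.+1 y2
      & NPD t1 [set x | v \in B1 x] p].
  case: (boolP (v \in U2)) => vU2.
    have [c Hc] := (P2 v vU2).1.
    have [/set0Pn [y1 y1T] _] := D1c v vU1.
    by exists y1, c => _; split => //; apply: (P1 v vU1).2; exact: nc1.
  have [[/set0Pn [y1 _] _] _] := tr1.
  have [[/set0Pn [y2 _] _] _] := tr2.
  by exists y1, y2 => /negP.
pose te := glue_rel t1 t2 y1 y2.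
pose B (x : (I1 + I2)%type) := match x with inl a => B1 a | inr b => B2 b end.
have BE : forall u, [set x | u \in B x] =
    inl @: [set x | u \in B1 x] :|: inr @: [set x | u \in B2 x].
  move=> u; apply/setP => [[a|a]].
    by rewrite !inE (mem_imset _ _ (@inl_inj I1 I2)) inl_notin_inr orbF inE.
  by rewrite !inE (mem_imset _ _ (@inr_inj I1 I2)) inr_notin_inl inE.
have T2E : forall u, u \notin U2 -> [set x | u \in B2 x] = set0.
  move=> u uU2; apply/setP => x; rewrite !inE; apply/negP => uB.
  by move: uU2; rewrite (subsetP (D2a x) u uB).
have T1E : forall u, u \notin U1 -> [set x | u \in B1 x] = set0.
  move=> u uU1; apply/setP => x; rewrite !inE; apply/negP => uB.
  by move: uU1; rewrite (subsetP (D1a x) u uB).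
have te1 : forall a b, te (inl a) (inl b) = t1 a b by [].
have te2 : forall a b, te (inr a) (inr b) = t2 a b by [].
have [ss1 _] := s1; have [ss2 _] := s2.
have [ste _] : simple_graph te by exact: glue_simple.
exists (I1 + I2)%type, te, B; split.
- exact: glue_simple.
- exact: glue_tree.
- split.
    move=> [a|a] /=; apply: subset_trans; [exact: D1a | exact: subsetUl | exact: D2a | exact: subsetUr].
  split.
    move=> u u'; rewrite !inE => uU u'U euu'.
    case uU1: (u \in U1); case u'U1: (u' \in U1).
    + by have [x xx] := D1b u u' uU1 u'U1 euu'; exists (inl x).
    + case uU2: (u \in U2).
        have u'U2 : u' \in U2 by move: u'U; rewrite u'U1.
        by have [x xx] := D2b u u' uU2 u'U2 euu'; exists (inr x).
      have u'U2 : u' \in U2 by move: u'U; rewrite u'U1.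
      by have := sp u u'; rewrite !inE uU1 uU2 u'U1 u'U2 euu' => /(_ isT isT).
    + have uU2 : u \in U2 by move: uU; rewrite uU1.
      case u'U2: (u' \in U2).
        by have [x xx] := D2b u u' uU2 u'U2 euu'; exists (inr x).
      by have := sp u' u; rewrite !inE uU1 uU2 u'U1 u'U2 se euu' => /(_ isT isT).
    + have uU2 : u \in U2 by move: uU; rewrite uU1.
      have u'U2 : u' \in U2 by move: u'U; rewrite u'U1.
      by have [x xx] := D2b u u' uU2 u'U2 euu'; exists (inr x).
  move=> u uU; rewrite BE; move: uU; rewrite inE => uU.
  case uU1: (u \in U1); case uU2: (u \in U2).
  + have uv : u = v by apply/set1P; apply: (subsetP I12); rewrite inE uU1 uU2.
    subst u; have [y1T [n2 [f2 [_ y2T _]]] _] := Hy uU2.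
    apply: (conn_union (a := inl y1) (b := inr y2)) ste (conn_map (@inl_inj I1 I2) te1 (D1c v uU1))
                 (conn_map (@inr_inj I1 I2) te2 (D2c v uU2)) _ _ _.
    * exact: imset_f.
    * exact: imset_f.
    * by rewrite /te /= !eqxx.
  + rewrite (T2E u (negbT uU2)) imset0 setU0.
    exact (conn_map (@inl_inj I1 I2) te1 (D1c u uU1)).
  + rewrite (T1E u (negbT uU1)) imset0 set0U.
    exact (conn_map (@inr_inj I1 I2) te2 (D2c u uU2)).
  + by move: uU; rewrite uU1 uU2.
- by move=> [a|a] /=; [exact: W1 | exact: W2].
move=> u uU; rewrite BE; move: uU; rewrite inE => uU.
case uU1: (u \in U1); case uU2: (u \in U2).
+ have uv : u = v by apply/set1P; apply: (subsetP I12); rewrite inE uU1 uU2.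
  subst u; have [y1T Hc Hn] := Hy uU2; split; last by move/(ncU uU2).
  exists (inr y2).
  apply: NCP_concat.
  * exact (NPD_map (@inl_inj I1 I2) te1 Hn).
  * exact (NCPc_map (@inr_inj I1 I2) te2 Hc).
  * by rewrite imsetLR.
  * move=> x y /imsetP [a _ ->] /imsetP [b _ ->]; rewrite /te /= orbb.
    by move=> /andP [_ /eqP ->].
+ rewrite (T2E u (negbT uU2)) imset0 setU0; split.
    exact (NCP_map (@inl_inj I1 I2) te1 (P1 u uU1).1).
  move=> ncu; apply: (NPD_map (@inl_inj I1 I2) te1); apply: (P1 u uU1).2.
  by apply: (noncut_part se sp I12) uU1 (negbT uU2) ncu.
+ rewrite (T1E u (negbT uU1)) imset0 set0U; split.
    exact (NCP_map (@inr_inj I1 I2) te2 (P2 u uU2).1).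
  move=> ncu; apply: (NPD_map (@inr_inj I1 I2) te2); apply: (P2 u uU2).2.
  have sp' := sep_sym se sp.
  have I21 : U2 :&: U1 \subset [set v] by rewrite setIC.
  have ncu' : noncut e (U2 :|: U1) u by rewrite setUC.
  exact: (noncut_part se sp' I21 uU2 (negbT uU1) ncu').
+ by move: uU; rewrite uU1 uU2.
Qed.


Hypothesis hB : forall S : {set V}, block e S -> good_decomp e S w p.

Lemma split_eq (U C : {set V}) : C \subset U -> U = C :|: (U :\: C).
Proof.
move=> CU; apply/setP => x; rewrite !inE.
by case xC: (x \in C); rewrite ?andbT ?(subsetP CU x xC) //= orbF.
Qed.

Lemma not_conn (U : {set V}) : U != set0 -> ~ connected_in e U ->
  exists a b, [/\ a \in U, b \in U & ~ connect (induced e U) a b].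
Proof.
move=> U0 nc; apply: Classical_Prop.NNPP => H; apply: nc; split => // x y xU yU.
apply: Classical_Prop.NNPP => ncon; apply: H; by exists x, y.
Qed.

Lemma main n : forall U : {set V}, #|U| <= n -> closedU e U -> Dec U.
Proof.
elim: n => [|n IH] U Un cl.
  by move: Un; rewrite leqn0 cards_eq0 => /eqP ->; exact: Dec_empty.
case: (boolP (U == set0)) => [/eqP -> |U0]; first exact: Dec_empty.
case: (boolP (#|U| == 1)) => [/cards1P [a ->]|Un1]; first exact: Dec_single.
have Uge2 : 2 <= #|U| by move: U0 Un1; rewrite -cards_eq0; lia.
have IHp : forall W : {set V}, W \proper U -> closedU e W -> Dec W.
  by move=> W WU; apply: IH; have := proper_card WU; lia.
case: (Classical_Prop.classic (connected_in e U)) => [cU|ncU].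
  case: (Classical_Prop.classic (forall u, u \in U -> noncut e U u)) => [Hn|Hn].
    apply: Dec_from_good; apply: hB; apply: block_of => //.
    move=> u uU; case: (Hn u uU) => // E.
    by move: (cardsD1 u U); rewrite uU E cards0 => E'; move: Uge2; rewrite E'.
  have [v [vU nv]] : exists v, v \in U /\ ~ noncut e U v.
    apply: Classical_Prop.NNPP => H; apply: Hn => u uU.
    apply: Classical_Prop.NNPP => nu; apply: H; by exists u.
  have Uv0 : U :\ v != set0 by apply/negP => /eqP E; apply: nv; left.
  have [a [b [aX bX nab]]] := not_conn Uv0 (fun h => nv (or_intror h)).
  have [C CE] : exists C, C = ccomp e (U :\ v) a by exists (ccomp e (U :\ v) a).
  have CX : C \subset U :\ v by rewrite CE; apply: comp_sub.
  have CU : C \subset U by apply: subset_trans CX (subD1set U v).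
  have vC : v \notin C by apply/negP => /(subsetP CX); rewrite !inE eqxx.
  have aC : a \in C by rewrite CE; apply: comp_self.
  have bC : b \notin C.
    by apply/negP; rewrite CE inE => /andP [_ cab].
  move: aX bX; rewrite !inE => /andP [av aU] /andP [bv bU].
  pose U1 := v |: C; pose U2 := U :\: C.
  have UE : U = U1 :|: U2.
    apply/setP => x; rewrite !inE; case: (x =P v) => [->|_]; first by rewrite vU.
    by case xC: (x \in C); rewrite ?andbT ?(subsetP CU x xC) //= orbF.
  have I12 : U1 :&: U2 \subset [set v].
    apply/subsetP => x; rewrite !inE => /andP [/orP [-> //|xC] /andP [xnC _]].
    by rewrite xC in xnC.
  have sp : sep e U1 U2.
    move=> s t; rewrite !inE => /andP [sU2 sU1] /andP [tU1 tU2].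
    have sC : s \in C.
      move: sU1 sU2 => /orP [/eqP ->|//]; by rewrite vU (negbTE vC).
    move: tU1 tU2; rewrite negb_or => /andP [tv tC] /andP [_ tU].
    have tX : t \in U :\ v by rewrite !inE tv tU.
    apply/negP => est; rewrite CE in sC tC; by have := comp_closed sC tX est; rewrite (negbTE tC).
  have U1p : U1 \proper U.
    rewrite properEneq; apply/andP; split.
      by apply/eqP => E; move: bU; rewrite -E !inE (negbTE bv) (negbTE bC).
    by apply/subsetP => x; rewrite !inE => /orP [/eqP ->//|/(subsetP CU)].
  have U2p : U2 \proper U.
    rewrite properEneq; apply/andP; split.
      by apply/eqP => E; move: aU; rewrite -E !inE aC.
    by apply/subsetP => x; rewrite !inE => /andP [].
  have clU : closedU e (U1 :|: U2) by rewrite -UE.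
  have D1 : Dec U1.
    apply: IHp U1p _; apply: (closed_part se sp I12 clU).
    by apply/set0Pn; exists v; rewrite !inE eqxx.
  have D2 : Dec U2.
    apply: IHp U2p _; apply: (closed_part se (sep_sym se sp) _ _ _ (v := v)).
    - by rewrite setIC.
    - by rewrite setUC.
    - by apply/set0Pn; exists v; rewrite !inE vU (negbTE vC).
  rewrite UE; apply: (Dec_glue D1 D2 (v := v)) => //.
  - by rewrite !inE eqxx.
  - move=> _; right; rewrite setU1K // CE; apply: (comp_conn se); by rewrite !inE av aU.
  - by move=> _; rewrite -UE.
have [a [b [aU bU nab]]] := not_conn U0 ncU.
have [C CE] : exists C, C = ccomp e U a by exists (ccomp e U a).
have CU : C \subset U by rewrite CE; apply: comp_sub.
have aC : a \in C by rewrite CE; apply: comp_self.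
have bC : b \notin C by apply/negP; rewrite CE inE => /andP [_ cab].
have UE := split_eq CU.
have sp : sep e C (U :\: C).
  move=> s t; rewrite !inE => /andP [_ sC] /andP [_ /andP [tC tU]].
  by apply/negP => est; rewrite CE in sC tC; have := comp_closed sC tU est; rewrite (negbTE tC).
have I12 : C :&: (U :\: C) \subset [set a].
  by apply/subsetP => x; rewrite !inE => /andP [xC /andP [xnC _]]; rewrite xC in xnC.
have Cp : C \proper U.
  rewrite properEneq CU andbT; apply/eqP => E; by move: bU; rewrite -E (negbTE bC).
have U2p : U :\: C \proper U.
  rewrite properEneq subsetDl andbT; apply/eqP => E; by move: aU; rewrite -E inE aC.
have clU : closedU e (C :|: (U :\: C)) by rewrite -UE.
have D1 : Dec C.
  apply: IHp Cp _; apply: (closed_part se sp I12 clU).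
  by apply/set0Pn; exists a.
have D2 : Dec (U :\: C).
  apply: IHp U2p _; apply: (closed_part se (sep_sym se sp) _ _ _ (v := a)).
  - by rewrite setIC.
  - by rewrite setUC.
  - by apply/set0Pn; exists b; rewrite inE bC bU.
rewrite UE; apply: (Dec_glue D1 D2 (v := a)) => //.
- by move=> aU2; move: aU2; rewrite inE aC.
- by move=> aU2; move: aU2; rewrite inE aC.
Qed.

End Main.


Unset Implicit Arguments.

Theorem lemma14 (V : finType) (e : rel V) (w p : nat) :
  simple_graph e ->
  (forall S : {set V}, block e S -> good_decomp e S w p) ->
  good_decomp e [set: V] w p.+1.
Proof.
move=> [se ie] hB.
have [I [te [B [s t D W P]]]] :=
  @main V e w p se ie hB #|[set: V]| [set: V] (leqnn _) (@closedT V e).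
exists I, te, B; split => //; split => //; split => //; split => // v vV.
apply: PW2; apply: NCP_NPD; exact: (P v vV).1.
Qed.
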